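(* Let $P$ be a Young diagram contained in a $\delta\times\delta$ square and $C_P\subset Gr(\delta,V)$ the corresponding Schubert cell. Then $C_P\cap\overline{JF}\neq\emptyset$ if and only if $P$ is simultaneously an $m$-core and an $n$-core. In that case all $W\in C_P$ have the same set $\Delta(W)=:\Delta_P$, and $C_P\cap\overline{JF}=\{W\in\overline{JF}:\Delta(W)=\Delta_P\}$, which is a cell of Piontkowski's affine cell decomposition of $\overline{JF}$.
   Context: Let $m,n$ be coprime positive integers, $\delta=\frac{(m-1)(n-1)}2$, $R=\mathbb{C}[[t^n,t^m]]\subset\mathbb{C}[[t]]$, and $V=\mathbb{C}[[t]]/t^{2\delta}\mathbb{C}[[t]]$, with filtration $V=V_{2\delta}\supset V_{2\delta-1}\supset\dots\supset V_0=0$, $V_i=t^{2\delta-i}V$. The Jacobi factor $\overline{JF}\subset Gr(\delta,V)$ is the subvariety of $\delta$-dimensional subspaces $W\subset V$ invariant under multiplication by $R$ (equivalently, $R$-submodules $M\subset\mathbb{C}[[t]]$ containing $t^{2\delta}\mathbb{C}[[t]]$ of codimension $\delta$). For a Young diagram $P$ in a $\delta\times\delta$ square with rows $p_1\le\dots\le p_\delta$, the Schubert cell $C_P$ is the set of $W\in Gr(\delta,V)$ with $\dim(W\cap V_i)=\#\{j: p_j+j\le i\}$ for all $i$. For $W\subset V$ set $\Delta(W)=\{d\in\mathbb{Z}: \exists p\in W,\ p\in V_{2\delta-d}\setminus V_{2\delta-d-1}\}\cup[2\delta,\infty)$ (the set of $t$-adic orders of elements of $W$, together with all integers $\ge2\delta$).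 Piontkowski's cell decomposition of $\overline{JF}$ has cells $\{W\in\overline{JF}:\Delta(W)=\Delta\}$, each an affine space. A Young diagram is a $p$-core if none of its boxes has hook length equal to $p$. *)

(* Defs.v *)
(* The field of complex numbers is modelled as
   [complex R] (= R[i]) for an arbitrary [R : realType]; since every
   realType is a complete archimedean ordered field, R is (isomorphic to)
   the real numbers and R[i] is (isomorphic to) C. *)
From HB Require Import structures.
From mathcomp Require Import all_boot all_order all_algebra.
From mathcomp Require Import reals.
From mathcomp Require Import complex.
Set Implicit Arguments. Unset Strict Implicit. Unset Printing Implicit Defensive.
Import GRing.Theory Num.Theory.
Local Open Scope ring_scope.

Section JacobiFactor.
Variable K : fieldType.

Definition jdelta (m n : nat) : nat := ((m.-1 * n.-1) %/ 2)%N.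

(* V = C[[t]]/t^N C[[t]] is modelled as row vectors of length N:
   coordinate k is the coefficient of t^k. *)
Definition coefV (N : nat) (w : 'rV[K]_N) (j : nat) : K :=
  match ltnP j N with
  | LtnNotGeq h => w 0 (Ordinal h)
  | _ => 0
  end.

(* elements of R = C[[t^n, t^m]]: power series (coefficient sequences)
   supported on the semigroup generated by n and m *)
Definition in_R (m n : nat) (f : nat -> K) : Prop :=
  forall k : nat, f k <> 0 -> exists a b : nat, k = (a * n + b * m)%N.

Definition actV (N : nat) (f : nat -> K) (w : 'rV[K]_N) : 'rV[K]_N :=
  \row_(k < N) \sum_(i < k.+1) f i * coefV w (k - i).

Definition tpow (N : nat) (k : 'I_N) : 'rV[K]_N := delta_mx 0 k.

(* the filtration V_i = t^(N-i) V  (here N = 2 delta) *)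
Definition Vfilt (N i : nat) : {vspace 'rV[K]_N} :=
  <<[seq tpow k | k : 'I_N <- enum 'I_N & (N - i <= k)%N]>>%VS.

Definition in_JF (m n : nat) (W : {vspace 'rV[K]_(2 * jdelta m n)}) : Prop :=
  \dim W = jdelta m n /\
  forall f : nat -> K, in_R m n f ->
    forall w, w \in W -> actV f w \in W.

(* Young diagrams in a d x d square, rows p_1 <= ... <= p_d
   (p_j is [nth 0 p j.-1]) *)
Definition young_in_square (d : nat) (p : seq nat) : Prop :=
  size p = d /\ sorted leq p /\ all (fun x => x <= d)%N p.

Definition in_schubert (d : nat) (p : seq nat) (W : {vspace 'rV[K]_(2 * d)}) : Prop :=
  \dim W = d /\
  forall i : nat, (i <= 2 * d)%N ->
    \dim (W :&: Vfilt (2 * d) i)%VS =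
      #|[set j : 'I_d | (nth 0 p j + j.+1 <= i)%N]|.

(* hook length of box in row j (0-based index into p), column c
   (1 <= c <= p_j): arm + leg + 1, where the leg counts the rows
   of length >= c lying beyond row j (rows are listed increasingly). *)
Definition hook (p : seq nat) (j c : nat) : nat :=
  ((nth 0 p j - c) + count (fun x => c <= x)%N (take j p) + 1)%N.

Definition is_core (q : nat) (p : seq nat) : Prop :=
  forall j c : nat, (j < size p)%N -> (1 <= c <= nth 0 p j)%N -> hook p j c <> q.

(* Delta(W) as a subset of the integers (all its elements are >= 0, so
   we use nat): orders of elements of W, together with [2 delta, oo). *)
Definition DeltaW (N : nat) (W : {vspace 'rV[K]_N}) (d : nat) : Prop :=
  (N <= d)%N \/
  ((d < N)%N /\ exists w, [/\ w \in W, w \in Vfilt N (N - d) &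
                               w \notin Vfilt N (N - d - 1)]).

Definition piontkowski_cell (m n : nat) (D : nat -> Prop)
    (W : {vspace 'rV[K]_(2 * jdelta m n)}) : Prop :=
  in_JF W /\ (forall d, DeltaW W d <-> D d).

End JacobiFactor.

(* Main.v *)
Require Import Defs.
From HB Require Import structures.
From mathcomp Require Import all_boot all_order all_algebra.
From mathcomp Require Import reals.
From mathcomp Require Import complex.
From Stdlib Require Import Classical.
From mathcomp Require Import zify.
Import GRing.Theory Num.Theory.
Set Implicit Arguments. Unset Strict Implicit.
Local Open Scope ring_scope.
Section LA.
Variable K : fieldType.
Variable N : nat.
Implicit Types (w : 'rV[K]_N) (W : {vspace 'rV[K]_N}).

Lemma span_closed (P : 'rV[K]_N -> Prop) (X : seq 'rV[K]_N) :
  P 0 -> (forall a u v, P u -> P v -> P (a *: u + v)) ->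
  (forall x, x \in X -> P x) -> forall w, w \in <<X>>%VS -> P w.
Proof.
move=> P0 Pc; elim: X => [|x X IH] HX w.
  by rewrite span_nil memv0 => /eqP ->.
rewrite span_cons => /memv_addP [u /vlineP [a ->] [v Hv ->]].
apply: Pc; first by apply: HX; rewrite inE eqxx.
by apply: IH => // y Hy; apply: HX; rewrite inE Hy orbT.
Qed.

Lemma span_tpowP (S : pred 'I_N) w :
  (w \in <<[seq tpow K k | k <- [seq k <- enum 'I_N | S k]]>>%VS) <->
  (forall k : 'I_N, ~~ S k -> w 0 k = 0).
Proof.
split.
  apply: (@span_closed (fun w => forall k : 'I_N, ~~ S k -> w 0 k = 0)).
  - by move=> k _; rewrite mxE.
  - by move=> a u v Hu Hv k Sk; rewrite !mxE Hu // Hv // mulr0 addr0.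
  move=> x /mapP [k']; rewrite mem_filter => /andP [Sk' _] -> k Sk.
  rewrite /tpow mxE eqxx /=.
  case: eqP => [E|]; last by [].
  by move: Sk; rewrite E Sk'.
move=> H; rewrite (row_sum_delta w); apply: memv_suml => k _.
case: (boolP (S k)) => Sk.
  apply: memvZ; apply: memv_span; apply: map_f.
  by rewrite mem_filter Sk mem_enum.
by rewrite H // scale0r mem0v.
Qed.

Definition lowzero w (a : nat) := forall k : 'I_N, (k < a)%N -> w 0 k = 0.

Lemma VfiltP i w : (w \in Vfilt K N i) <-> lowzero w (N - i).
Proof.
rewrite /Vfilt (span_tpowP (fun k : 'I_N => (N - i <= k)%N)).
split=> H k; first by move=> lt; apply: H; rewrite -ltnNge.
by rewrite -ltnNge; apply: H.
Qed.

Lemma Vfilt_mono i j : (i <= j)%N -> (Vfilt K N i <= Vfilt K N j)%VS.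
Proof.
move=> le; apply/subvP => w /VfiltP H; apply/VfiltP => k lt; apply: H.
apply: (leq_trans lt); exact: leq_sub2l.
Qed.

Lemma Vfilt_full : Vfilt K N N = fullv.
Proof.
apply/eqP; rewrite eqEsubv subvf /=; apply/subvP => w _; apply/VfiltP.
by move=> k; rewrite subnn.
Qed.

Lemma Vfilt0 : Vfilt K N 0 = 0%VS.
Proof.
apply/eqP; rewrite -subv0; apply/subvP => w /VfiltP H; rewrite memv0.
apply/eqP/rowP => k; rewrite H ?mxE //; rewrite subn0; exact: ltn_ord.
Qed.

Definition gW W i := \dim (W :&: Vfilt K N i).

Definition jumpW W i := exists w, [/\ w \in W, w \in Vfilt K N i.+1 & w \notin Vfilt K N i].

Lemma gW0 W : gW W 0 = 0%N.
Proof. by rewrite /gW Vfilt0 capv0 dimv0. Qed.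

Lemma gWN W : gW W N = \dim W.
Proof. by rewrite /gW Vfilt_full capvf. Qed.

Lemma gW_step W i : (i < N)%N ->
  (jumpW W i -> gW W i.+1 = (gW W i).+1) /\ (~ jumpW W i -> gW W i.+1 = gW W i).
Proof.
move=> iN; have sub : (W :&: Vfilt K N i <= W :&: Vfilt K N i.+1)%VS.
  by apply: capvS => //; apply: Vfilt_mono.
split.
  move=> [w0 [w0W w0V w0n]].
  have lt : (gW W i < gW W i.+1)%N.
    rewrite /gW ltn_neqAle (dimv_leqif_eq sub).1 andbT.
    rewrite (dimv_leqif_eq sub).2; apply/negP => /eqP E.
    have: w0 \in (W :&: Vfilt K N i.+1)%VS by rewrite memv_cap w0W.
    by rewrite -E memv_cap (negbTE w0n) andbF.
  have k0lt : (N - i.+1 < N)%N by lia.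
  pose k0 : 'I_N := Ordinal k0lt.
  have [low0 nz0] : lowzero w0 (N - i.+1) /\ w0 0 k0 != 0.
    move/VfiltP: w0V => low; split => //; apply/negP => /eqP z.
    move: w0n => /negP; apply; apply/VfiltP => k lt'.
    case: (ltnP k (N - i.+1)) => h; first exact: low.
    have -> : k = k0 by apply: val_inj => /=; lia.
    exact: z.
  have up : (gW W i.+1 <= (gW W i).+1)%N.
    have sub2 : (W :&: Vfilt K N i.+1 <= (W :&: Vfilt K N i) + <[w0]>)%VS.
      apply/subvP => a; rewrite memv_cap => /andP [aW /VfiltP alow].
      pose c := a 0 k0 / w0 0 k0.
      have -> : a = (a - c *: w0) + c *: w0 by rewrite subrK.
      apply: memv_add; last by apply: memvZ; apply: memv_line.
      rewrite memv_cap memvB ?memvZ //=; apply/VfiltP => k lt'.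
      rewrite !mxE.
      case: (ltnP k (N - i.+1)) => h; first by rewrite alow // low0 // mulr0 subr0.
      have -> : k = k0 by apply: val_inj => /=; lia.
      by rewrite /c divfK // subrr.
    apply: (leq_trans (dimvS sub2)).
    apply: (leq_trans (dimv_add_leqif _ _).1).
    by rewrite dim_vline /gW; case: (w0 != 0); rewrite ?addn0 ?addn1.
  by apply/eqP; rewrite eqn_leq up.
move=> nj; apply/eqP; rewrite eqn_leq (dimvS sub) andbT /gW; apply: dimvS.
apply/subvP => a; rewrite memv_cap => /andP [aW aV]; rewrite memv_cap aW /=.
case: (boolP (a \in Vfilt K N i)) => // an; exfalso; apply: nj; exists a; split => //.
Qed.

Lemma DeltaWP W dd : DeltaW W dd <-> (N <= dd)%N \/ ((dd < N)%N /\ jumpW W (N - dd - 1)).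
Proof.
rewrite /DeltaW /jumpW; split; case=> [h|[lt [w [h1 h2 h3]]]]; (try by left);
  right; split => //; exists w; split => //; move: h2; have -> // : (N - dd - 1).+1 = (N - dd)%N by lia.
Qed.

Lemma coefV_lt w j (h : (j < N)%N) : coefV w j = w 0 (Ordinal h).
Proof.
rewrite /coefV; case: ltnP => h'; first by congr (w 0 _); apply: val_inj.
by exfalso; move: h'; rewrite leqNgt h.
Qed.

Definition tq (q : nat) : nat -> K := fun k => if k == q then 1 else 0.

Lemma actV_tq q w (k : 'I_N) :
  actV (tq q) w 0 k = if (q <= k)%N then coefV w (k - q) else 0.
Proof.
rewrite mxE; case: leqP => h.
  have hq : (q < k.+1)%N by [].
  rewrite (bigD1 (Ordinal hq)) //= big1 ?addr0 /tq ?eqxx ?mul1r //.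
  move=> i ne; case: eqP => [E|]; last by rewrite mul0r.
  by exfalso; move/eqP: ne; apply; apply: val_inj.
rewrite big1 // => i _; rewrite /tq; case: eqP => [E|]; last by rewrite mul0r.
by exfalso; have := ltn_ord i; rewrite E; lia.
Qed.

Lemma jump_low i : (i < N)%N -> forall w, w \in Vfilt K N i.+1 ->
  forall h : (N - i.+1 < N)%N, (w \notin Vfilt K N i) = (w 0 (Ordinal h) != 0).
Proof.
move=> iN w /VfiltP low h; apply/idP/idP.
  apply: contraNN => /eqP z; apply/VfiltP => k lt'.
  case: (ltnP k (N - i.+1)) => hk; first exact: low.
  by have -> : k = Ordinal h by apply: val_inj => /=; lia.
apply: contraNN => /VfiltP low2; apply/eqP; apply: low2 => /=; lia.
Qed.

Lemma shift_jump W q i : (i < N)%N -> (q <= i)%N ->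
  (forall w, w \in W -> actV (tq q) w \in W) -> jumpW W i -> jumpW W (i - q).
Proof.
move=> iN qi inv [w [wW wV wn]].
have h : (N - i.+1 < N)%N by lia.
have h' : (N - (i - q).+1 < N)%N by lia.
exists (actV (tq q) w); split; first exact: inv.
  apply/VfiltP => k lt; rewrite actV_tq; case: leqP => // qk.
  have hk : (k - q < N)%N by lia.
  rewrite (coefV_lt _ hk); move/VfiltP: wV; apply => /=; lia.
have vV : actV (tq q) w \in Vfilt K N (i - q).+1.
  apply/VfiltP => k lt; rewrite actV_tq; case: leqP => // qk.
  have hk : (k - q < N)%N by lia.
  rewrite (coefV_lt _ hk); move/VfiltP: wV; apply => /=; lia.
rewrite (jump_low iN wV h) in wn.
rewrite (jump_low _ vV h'); last by lia.
rewrite actV_tq /=; case: leqP => hh; last by lia.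
have hk : (N - (i - q).+1 - q < N)%N by lia.
rewrite (coefV_lt _ hk).
by have -> : Ordinal hk = Ordinal h by apply: val_inj => /=; lia.
Qed.
End LA.

Local Close Scope ring_scope.
Section Comb.
Variable p : seq nat.
Hypothesis sp : sorted leq p.
Local Notation e j := (nth 0 p j + j)%N.

Lemma nth_mono j1 j2 : (j1 <= j2)%N -> (j2 < size p)%N -> (nth 0 p j1 <= nth 0 p j2)%N.
Proof.
move=> le lt; apply: (sorted_leq_nth leq_trans leqnn) => //; rewrite inE //.
exact: leq_ltn_trans lt.
Qed.

Lemma count_take_sum (P : pred nat) j : (j <= size p)%N ->
  count P (take j p) = (\sum_(0 <= k < j) P (nth 0 p k))%N.
Proof.
elim: j => [|j IH] lt; first by rewrite take0 big_geq.
rewrite (take_nth 0) // -cats1 count_cat IH ?big_nat_recr //= ?addn0 //.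
exact: ltnW.
Qed.

Lemma sum_bool_le (b : nat -> bool) a c : (\sum_(a <= k < c) b k <= c - a)%N.
Proof.
apply: leq_trans (_ : \sum_(a <= k < c) 1 <= _)%N.
  by apply: leq_sum => k _; rewrite leq_b1.
by rewrite sum_nat_const_nat muln1.
Qed.

Lemma sum_bool_all (b : nat -> bool) a c :
  (forall k, (a <= k < c)%N -> b k) -> (\sum_(a <= k < c) b k = c - a)%N.
Proof.
move=> H; rewrite -[RHS]muln1 -sum_nat_const_nat.
by apply: eq_big_nat => k /H ->.
Qed.

Lemma sum_bool_none (b : nat -> bool) a c :
  (forall k, (a <= k < c)%N -> ~~ b k) -> (\sum_(a <= k < c) b k = 0)%N.
Proof. by move=> H; apply: big1_seq => k; rewrite mem_index_iota => /H /negbTE ->. Qed.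

Lemma hook_no q j c : (j < size p)%N -> (1 <= c <= nth 0 p j)%N -> hook p j c = q ->
  (q <= e j)%N /\ forall j', (j' < size p)%N -> e j' <> (e j - q)%N.
Proof.
move=> jlt /andP [c1 cp]; rewrite /hook.
set L := count _ _.
have Lj : (L <= j)%N.
  by rewrite /L (leq_trans (count_size _ _)) // size_takel // ltnW.
move=> hq; split; first lia.
move=> j' j'lt E.
case: (leqP j j') => jj.
  have := @nth_mono j j' jj j'lt; lia.
have Ls : L = (\sum_(0 <= k < j') (c <= nth 0 p k) + \sum_(j' <= k < j) (c <= nth 0 p k))%N.
  by rewrite /L count_take_sum ?(ltnW jlt) // -big_cat_nat //= ltnW.
case: (leqP c (nth 0 p j')) => cj'.
  have : (\sum_(j' <= k < j) (c <= nth 0 p k) = j - j')%N.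
    apply: sum_bool_all => k /andP [k1 k2]; apply: leq_trans cj' _.
    by apply: nth_mono => //; apply: ltn_trans jlt.
  lia.
have : (\sum_(0 <= k < j') (c <= nth 0 p k) = 0)%N.
  apply: sum_bool_none => k /andP [_ k2]; rewrite -ltnNge.
  apply: leq_ltn_trans cj'; apply: nth_mono => //; exact: ltnW.
move: Ls; rewrite (@big_ltn _ _ _ j' j) // leqNgt cj' /= add0n.
have := sum_bool_le (fun k => c <= nth 0 p k)%N j'.+1 j.
lia.
Qed.

Lemma core_closed q j : is_core q p -> (0 < q)%N -> (j < size p)%N -> (q <= e j)%N ->
  exists2 j', (j' < size p)%N & e j' = (e j - q)%N.
Proof.
move=> core q0 jlt qle.
case: (classic (exists2 j', (j' < size p)%N & e j' = (e j - q)%N)) => // none.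
exfalso.
set v := (e j - q)%N.
have ex : exists k, (v < e k)%N by exists j; rewrite /v; lia.
case: (ex_minnP ex) => s vs smin.
have sj : (s <= j)%N by apply: smin; rewrite /v; lia.
have slt : (s < size p)%N by exact: leq_ltn_trans jlt.
have below : forall k, (k < s)%N -> (e k < v)%N.
  move=> k ks; have : ~~ (v < e k)%N.
    by apply/negP => /smin; rewrite leqNgt ks.
  rewrite -leqNgt leq_eqVlt => /orP [/eqP E|//].
  by exfalso; apply: none; exists k => //; lia.
have sv : (s <= v)%N.
  case: s vs smin sj slt below => // s' _ _ _ _ below.
  by have := below s' (ltnSn _); lia.
pose c := (v - s + 1)%N.
have ps := @nth_mono s j sj jlt.
have cp : (c <= nth 0 p j)%N by rewrite /c; lia.
have Lval : count (fun x => c <= x)%N (take j p) = (j - s)%N.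
  rewrite count_take_sum ?(ltnW jlt) // (@big_cat_nat _ _ _ s) //=.
  rewrite sum_bool_none ?add0n.
    apply: sum_bool_all => k /andP [k1 k2].
    have := @nth_mono s k k1 (ltn_trans k2 jlt).
    by rewrite /c; lia.
  move=> k /andP [_ k2]; rewrite -ltnNge.
  have h1 : (s.-1 < s)%N by lia.
  have := below _ h1.
  have h2 : (k <= s.-1)%N by lia.
  have := @nth_mono k s.-1 h2 (leq_ltn_trans (leq_pred _) slt).
  rewrite /c; lia.
apply: (core j c jlt); first by rewrite /c cp; lia.
rewrite /hook Lval /c /v; lia.
Qed.
End Comb.

Unset Implicit Arguments. Set Strict Implicit.
Local Open Scope ring_scope.
Section Schub.
Variable d : nat.
Variable p : seq nat.
Hypothesis yp : young_in_square d p.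
Local Notation e j := (nth 0 p j + j)%N.

Definition jc i := [exists j : 'I_d, e j == i].
Definition cc i := #|[set j : 'I_d | (nth 0 p j + j.+1 <= i)%N]|.

Lemma sp : sorted leq p. Proof. by case: yp => _ []. Qed.
Lemma szp : size p = d. Proof. by case: yp. Qed.

Lemma e_inj (j1 j2 : 'I_d) : e j1 = e j2 -> j1 = j2.
Proof.
move=> E; apply: val_inj => /=.
have h1 : (j1 < size p)%N by rewrite szp. have h2 : (j2 < size p)%N by rewrite szp.
case: (ltngtP j1 j2) => // lt.
  by have := nth_mono sp (ltnW lt) h2; lia.
by have := nth_mono sp (ltnW lt) h1; lia.
Qed.

Lemma cc0 : cc 0 = 0%N.
Proof. by rewrite /cc; apply/eqP; rewrite cards_eq0; apply/eqP/setP => j; rewrite !inE; lia. Qed.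

Lemma cc_step i : cc i.+1 = (cc i + jc i)%N.
Proof.
rewrite /cc /jc; case: existsP => [[j0 /eqP E]|none].
  have -> : [set j : 'I_d | (nth 0 p j + j.+1 <= i.+1)%N] =
            j0 |: [set j : 'I_d | (nth 0 p j + j.+1 <= i)%N].
    apply/setP => j; rewrite !inE.
    case: (eqVneq j j0) => [->|ne] /=; first by lia.
    have : e j != e j0 by apply/negP => /eqP /e_inj /eqP; rewrite (negbTE ne).
    rewrite E; lia.
  by rewrite cardsU1 inE addnC; congr (_ + _)%N; rewrite /= -E; case: leqP => //; lia.
rewrite addn0; apply: eq_card => j; rewrite !inE.
have : e j != i by apply/negP => /eqP E; apply: none; exists j; rewrite E.
lia.
Qed.

Lemma ccN : cc (2 * d) = d.
Proof.
rewrite /cc -[RHS]card_ord; apply: eq_card => j; rewrite !inE.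
case: yp => _ [_ /allP al].
have : (nth 0 p j <= d)%N by apply: al; apply: mem_nth; rewrite szp.
have := ltn_ord j; lia.
Qed.

Variable K : fieldType.

Lemma gW_cc (W : {vspace 'rV[K]_(2 * d)}) :
  (forall i, (i < 2 * d)%N -> (jumpW W i <-> jc i)) ->
  forall i, (i <= 2 * d)%N -> gW W i = cc i.
Proof.
move=> H; elim=> [|i IH] lt.
  by rewrite gW0 cc0.
have lt' : (i < 2 * d)%N by [].
have [s1 s2] := gW_step W lt'.
rewrite cc_step.
have e1 : gW W i = cc i by apply: IH; exact: ltnW.
case: (classic (jumpW W i)) => J.
  by rewrite s1 // e1 (proj1 (H i lt') J) addn1.
rewrite s2 // e1; case E: (jc i); last by rewrite addn0.
by exfalso; apply: J; apply/(H i lt'); rewrite E.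
Qed.

Lemma schubertP (W : {vspace 'rV[K]_(2 * d)}) : in_schubert p W <->
  \dim W = d /\ (forall i, (i < 2 * d)%N -> (jumpW W i <-> jc i)).
Proof.
rewrite /in_schubert; split; last first.
  move=> [dW H]; split => // i lt; apply: gW_cc => // j lj; exact: H.
  move=> [dW H]; split => // i lt.
  have [s1 s2] := gW_step W lt.
  have e1 : gW W i = cc i by apply: H; exact: ltnW.
  have e2 : gW W i.+1 = cc i.+1 by apply: H.
  have cs := cc_step i.
  split.
    move=> J; move: (s1 J); rewrite e1 e2 cs; case: (jc i) => //; lia.
  move=> jt; case: (classic (jumpW W i)) => // nJ.
  by move: (s2 nJ); rewrite e1 e2 cs jt; lia.
Qed.

Definition Smono (k : 'I_(2 * d)) := jc (2 * d - k.+1)%N.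
Definition Wm : {vspace 'rV[K]_(2 * d)} :=
  <<[seq tpow K k | k <- [seq k <- enum 'I_(2 * d) | Smono k]]>>%VS.

Lemma Wm_jump i : (i < 2 * d)%N -> jumpW Wm i <-> jc i.
Proof.
move=> iN; have h : (2 * d - i.+1 < 2 * d)%N by lia.
have Sk0 : Smono (Ordinal h) = jc i.
  by rewrite /Smono /=; have -> : (2 * d - (2 * d - i.+1).+1 = i)%N by lia.
split.
  move=> [w [wW wV wn]]; rewrite (jump_low iN wV h) in wn.
  rewrite -Sk0; case: (boolP (Smono (Ordinal h))) => // nS.
  by move/eqP: wn; case; move/span_tpowP: wW; apply.
move=> ji; exists (tpow K (Ordinal h)); split.
- apply/span_tpowP => k nS; rewrite /tpow mxE /=; case: eqP => // E.
  by move: nS; rewrite E Sk0 ji.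
- apply/VfiltP => k lt; rewrite /tpow mxE /=; case: eqP => // E.
  by move: lt; rewrite E /=; lia.
- rewrite (jump_low iN _ h).
    by rewrite /tpow mxE !eqxx oner_neq0.
  apply/VfiltP => k lt; rewrite /tpow mxE /=; case: eqP => // E.
  by move: lt; rewrite E /=; lia.
Qed.

Lemma Wm_inv (m n : nat) :
  (forall x a b, jc x -> (a * n + b * m <= x)%N -> jc (x - (a * n + b * m))%N) ->
  forall f, in_R m n f -> forall w, w \in Wm -> actV f w \in Wm.
Proof.
move=> Hcl f fR w /span_tpowP wW; apply/span_tpowP => k nS.
rewrite mxE; apply: big1 => i _.
case: (eqVneq (f i) 0) => [->|nz]; first by rewrite mul0r.
have [a [b Eab]] := fR i (elimN eqP nz).
have hk : (k - i < 2 * d)%N by have := ltn_ord k; lia.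
rewrite (coefV_lt _ hk) wW ?mulr0 //; apply/negP => S'.
move/negP: nS; apply; rewrite /Smono.
have ik : (i <= k)%N by have := ltn_ord i; lia.
have := Hcl (2 * d - (k - i).+1)%N a b S'.
rewrite -Eab; have -> : (2 * d - (k - i).+1 - i = 2 * d - k.+1)%N.
  by have := ltn_ord k; lia.
apply; have := ltn_ord k; lia.
Qed.

Lemma dim_Wm : \dim Wm = d.
Proof.
have := @gW_cc Wm (fun i lt => Wm_jump i lt) (2 * d) (leqnn _).
by rewrite gWN ccN.
Qed.

Lemma e_lt j : (j < d)%N -> (e j < 2 * d)%N.
Proof.
move=> jd; case: yp => sz [_ /allP al].
have : (nth 0 p j <= d)%N by apply: al; apply: mem_nth; rewrite sz.
lia.
Qed.

Lemma core_jc q : is_core q p -> (0 < q)%N -> forall x, jc x -> (q <= x)%N -> jc (x - q)%N.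
Proof.
move=> core q0 x /existsP [j /eqP E] qx.
have jlt : (j < size p)%N by rewrite szp.
have [j' j'lt E'] : exists2 j', (j' < size p)%N & e j' = (e j - q)%N.
  by apply: (core_closed sp core q0 jlt); rewrite E.
have j'd : (j' < d)%N by rewrite -szp.
by apply/existsP; exists (Ordinal j'd); rewrite /= E' E.
Qed.

Lemma iter_closed m n : (0 < m)%N -> (0 < n)%N -> is_core m p -> is_core n p ->
  forall x a b, jc x -> (a * n + b * m <= x)%N -> jc (x - (a * n + b * m))%N.
Proof.
move=> m0 n0 cm cn x a b; elim: a x => [|a IHa] x.
  elim: b x => [|b IHb] x jx le; first by move: jx; congr (is_true (jc _)); lia.
  have jx' : jc (x - m)%N by apply: core_jc => //; lia.
  have := IHb (x - m)%N jx'.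
  have -> : (x - (0 * n + b.+1 * m) = x - m - (0 * n + b * m))%N by lia.
  apply; lia.
move=> jx le.
have jx' : jc (x - n)%N by apply: core_jc => //; lia.
have := IHa (x - n)%N jx'.
have -> : (x - (a.+1 * n + b * m) = x - n - (a * n + b * m))%N by lia.
apply; lia.
Qed.

Lemma JF_core q (W : {vspace 'rV[K]_(2 * d)}) :
  (forall i, (i < 2 * d)%N -> (jumpW W i <-> jc i)) ->
  (forall w, w \in W -> actV (tq K q) w \in W) -> (0 < q)%N -> is_core q p.
Proof.
move=> Hj inv q0 j c jlt cc hq.
have [qle none] := hook_no sp jlt cc hq.
have jd : (j < d)%N by rewrite -szp.
have ejN := e_lt j jd.
have J : jumpW W (e j) by apply/(Hj _ ejN)/existsP; exists (Ordinal jd).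
have J' := shift_jump ejN qle inv J.
have lt' : (e j - q < 2 * d)%N by lia.
have /existsP [j' /eqP E] := proj1 (Hj _ lt') J'.
apply: (none j') => //; rewrite szp //.
Qed.

Definition inJFd m n (W : {vspace 'rV[K]_(2 * d)}) :=
  \dim W = d /\ forall f : nat -> K, in_R m n f -> forall w, w \in W -> actV f w \in W.

Lemma tq_R m n q : (q = m \/ q = n) -> in_R m n (tq K q).
Proof.
move=> hq k; rewrite /tq; case: eqP => // -> _.
by case: hq => ->; [exists 0%N, 1%N | exists 1%N, 0%N]; lia.
Qed.

Lemma main_gen m n : (0 < m)%N -> (0 < n)%N ->
  ((exists W : {vspace 'rV[K]_(2 * d)}, in_schubert p W /\ inJFd m n W)
   <-> (is_core m p /\ is_core n p)) /\
  (is_core m p -> is_core n p ->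
   exists DP : nat -> Prop,
     (forall W : {vspace 'rV[K]_(2 * d)},
        in_schubert p W -> forall dd, DeltaW W dd <-> DP dd) /\
     (forall W : {vspace 'rV[K]_(2 * d)},
        (in_schubert p W /\ inJFd m n W) <->
        (inJFd m n W /\ (forall dd, DeltaW W dd <-> DP dd)))).
Proof.
move=> m0 n0; split.
  split.
    move=> [W [/schubertP [dW Hj] [_ inv]]]; split.
      by apply: (@JF_core m W Hj) => // w; apply: inv; apply: tq_R; left.
    by apply: (@JF_core n W Hj) => // w; apply: inv; apply: tq_R; right.
  move=> [cm cn]; exists Wm; split.
    by apply/schubertP; split; [exact: dim_Wm | exact: Wm_jump].
  split; first exact: dim_Wm.
  by apply: Wm_inv; apply: iter_closed.
move=> cm cn.
exists (fun dd => (2 * d <= dd)%N \/ ((dd < 2 * d)%N /\ jc (2 * d - dd - 1)%N)).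
have key : forall W : {vspace 'rV[K]_(2 * d)},
    (forall i, (i < 2 * d)%N -> (jumpW W i <-> jc i)) ->
    forall dd, DeltaW W dd <->
      ((2 * d <= dd)%N \/ ((dd < 2 * d)%N /\ jc (2 * d - dd - 1)%N)).
  move=> W Hj dd; rewrite DeltaWP; split; case=> [h|[h1 h2]]; (try by left); right;
    split => //; apply/Hj => //; lia.
split.
  by move=> W /schubertP [_ Hj]; apply: key.
move=> W; split.
  move=> [/schubertP [dW Hj] jf]; split => //; exact: key.
move=> [[dW inv] HD]; split; last by [].
apply/schubertP; split => // i lt.
have := HD (2 * d - i.+1)%N; rewrite DeltaWP.
have -> : (2 * d - (2 * d - i.+1) - 1 = i)%N by lia.
move=> [H1 H2]; split.
  move=> J; have : (2 * d <= 2 * d - i.+1)%N \/ ((2 * d - i.+1 < 2 * d)%N /\ jumpW W i).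
    by right; split => //; lia.
  by move/H1 => [h|[_ h]]; [lia | exact: h].
move=> ji; have : (2 * d <= 2 * d - i.+1)%N \/ ((2 * d - i.+1 < 2 * d)%N /\ jc i).
  by right; split => //; lia.
by move/H2 => [h|[_ h]]; [lia | exact: h].
Qed.
End Schub.

Theorem mainTheorem4 (R : realType) (m n : nat) (p : seq nat) :
  (0 < m)%N -> (0 < n)%N -> coprime m n ->
  young_in_square (jdelta m n) p ->
  ((exists W : {vspace 'rV[complex R]_(2 * jdelta m n)},
      in_schubert p W /\ in_JF W)
   <-> (is_core m p /\ is_core n p)) /\
  (is_core m p -> is_core n p ->
   exists DP : nat -> Prop,
     (forall W : {vspace 'rV[complex R]_(2 * jdelta m n)},
        in_schubert p W -> forall d, DeltaW W d <-> DP d) /\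
     (forall W : {vspace 'rV[complex R]_(2 * jdelta m n)},
        (in_schubert p W /\ in_JF W) <-> piontkowski_cell DP W)).
Proof.
move=> m0 n0 _ yp.
have [H1 H2] := @main_gen (jdelta m n) p yp (complex R) m n m0 n0.
split; first exact: H1.
move=> cm cn; have [DP [D1 D2]] := H2 cm cn.
exists DP; split; first exact: D1.
move=> W; exact: (D2 W).
Qed.
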